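(* Let $\lambda$ be an infinite cardinal and $\chi$ either $2$ or an infinite cardinal, with $\chi<\lambda$. For every $S\in J_\chi[\lambda^+]$, the set $S\cap E^{\lambda^+}_{\mathrm{cf}(\lambda)}$ is nonstationary.
   Context: $E^\kappa_\theta=\{\alpha<\kappa\mid\mathrm{cf}(\alpha)=\theta\}$. For regular uncountable $\kappa$, $J_\chi[\kappa]$ is the collection of all $S\subseteq\kappa$ for which there exist a club $C\subseteq\kappa$ and functions $f_i:\kappa\to[\kappa]^{<\chi}$ ($i<\kappa$) such that for every $\alpha\in S\cap C$, every regressive $f:\alpha\to\alpha$ and every cofinal $B\subseteq\alpha$, there is $i<\alpha$ with $\sup\{\beta\in B\mid f(\beta)\in f_i(\beta)\}=\alpha$. *)

(* Defs.v *)
(* Ordinals below kappa = lambda^+ are modelled as elements of a type K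
   carrying a strict well-order [lt]; cardinals are compared via injections
   between (sub)types. *)

Set Implicit Arguments.

Section Defs.
Variable K : Type.
Variable lt : K -> K -> Prop.

Definition strict_well_order : Prop :=
  (forall x, ~ lt x x) /\
  (forall x y z, lt x y -> lt y z -> lt x z) /\
  (forall x y, lt x y \/ x = y \/ lt y x) /\
  well_founded lt.

(* the initial segment {x | x < a}, i.e. the ordinal a *)
Definition below (a : K) : K -> Prop := fun x => lt x a.

End Defs.

Definition injects (A B : Type) : Prop :=
  exists f : A -> B, forall x y, f x = f y -> x = y.

Definition equinum (A B : Type) : Prop :=
  exists f : A -> B, (forall x y, f x = f y -> x = y) /\ (forall y, exists x, f x = y).

Definition card_lt (A B : Type) : Prop := injects A B /\ ~ injects B A.

Definition infinite_type (A : Type) : Prop := injects nat A.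

Section Ord.
Variable K : Type.
Variable lt : K -> K -> Prop.

Definition sup_eq (X : K -> Prop) (a : K) : Prop :=
  (forall b, X b -> lt b a) /\ (forall d, lt d a -> exists b, X b /\ lt d b).

Definition cofinal_in (X : K -> Prop) (a : K) : Prop :=
  (forall b, X b -> lt b a) /\ (forall d, lt d a -> exists b, X b /\ (d = b \/ lt d b)).

(* cf(a) = cf(b): the least cardinalities of cofinal subsets of a and of b coincide *)
Definition cf_eq (a b : K) : Prop :=
  exists X Y : K -> Prop,
    cofinal_in X a /\ cofinal_in Y b /\
    (forall X', cofinal_in X' a -> injects {x | X x} {x | X' x}) /\
    (forall Y', cofinal_in Y' b -> injects {y | Y y} {y | Y' y}) /\
    equinum {x | X x} {y | Y y}.

Definition E_cf (l : K) : K -> Prop := fun a => cf_eq a l.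

(* club subsets of kappa (kappa = the whole type K) *)
Definition club (C : K -> Prop) : Prop :=
  (forall d, exists b, C b /\ lt d b) /\
  (forall a, (exists g, lt g a) -> sup_eq (fun b => C b /\ lt b a) a -> C a).

Definition nonstationary (T : K -> Prop) : Prop :=
  exists C, club C /\ forall a, ~ (C a /\ T a).

Definition regressive (a : K) (f : K -> K) : Prop :=
  (forall b, lt b a -> lt (f b) a) /\
  (forall b, lt b a -> (exists g, lt g b) -> lt (f b) b).

(* S \in J_chi[kappa], with chi the cardinality of the type Chi *)
Definition in_J (Chi : Type) (S : K -> Prop) : Prop :=
  exists (C : K -> Prop) (F : K -> K -> (K -> Prop)),
    club C /\
    (forall i b, card_lt {x | F i b x} Chi) /\
    (forall a, S a -> C a ->
       forall f, regressive a f ->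
       forall B : K -> Prop, sup_eq B a ->
       exists i, lt i a /\ sup_eq (fun b => B b /\ F i b (f b)) a).

End Ord.

(* Main.v *)
Require Import Defs.
From mathcomp Require Import all_boot all_classical.
From Stdlib Require Import Wellfounded Classical ClassicalEpsilon ProofIrrelevance FunctionalExtensionality Lia.
Local Open Scope classical_set_scope.

Lemma infinite_nat_inj (T : Type) : infinite_set [set: T] -> injects nat T.
Proof.
move=> /infiniteP /card_leP [f].
have hi := @inj _ _ _ f.
exists (fun n => val (f (exist _ n (mem_set (I : setT n))))).
move=> x y /val_inj /hi h.
have := h (mem_set I) (mem_set I).
by case.
Qed.

Lemma nat_inj_infinite (T : Type) : injects nat T -> infinite_set [set: T].
Proof.
move=> [g gi] fin.
pose h (t : T) : nat := match pselect (exists n, g n = t) with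
  | left e => projT1 (cid e) | right _ => 0%N end.
have hg n : h (g n) = n.
  rewrite /h; case: pselect => [e|ne]; last by exfalso; apply: ne; exists n.
  by case: (cid e) => m /= /gi.
apply: infinite_nat.
apply: (sub_finite_set _ (finite_image h fin)).
by move=> n _; exists (g n).
Qed.

Lemma fin_prod (A B : Type) : ~ injects nat A -> ~ injects nat B -> ~ injects nat (A * B).
Proof.
move=> hA hB /nat_inj_infinite; apply.
have fA : finite_set [set: A] by apply: contrapT => /infinite_nat_inj.
have fB : finite_set [set: B] by apply: contrapT => /infinite_nat_inj.
have := finite_setX fA fB.
by rewrite setXTT.
Qed.

Lemma inj_trans (A B C : Type) : injects A B -> injects B C -> injects A C.
Proof.
intros [f hf] [g hg]; exists (fun x => g (f x)); intros x y h; apply hf, hg, h.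
Qed.

Lemma inj_refl (A : Type) : injects A A.
Proof. exists (fun x => x); auto. Qed.

Lemma inj_sub_fun (A B : Type) (P : A -> Prop) (g : A -> B) :
  (forall x y, P x -> P y -> g x = g y -> x = y) -> injects {x | P x} B.
Proof.
intros hg; exists (fun s => g (proj1_sig s)).
intros [x px] [y py] h; simpl in h.
assert (x = y) by (apply hg; auto). subst y.
f_equal; apply proof_irrelevance.
Qed.

Lemma inj_sub_fun2 (A B : Type) (P : A -> Prop) (Q : B -> Prop) (g : A -> B) :
  (forall x, P x -> Q (g x)) ->
  (forall x y, P x -> P y -> g x = g y -> x = y) -> injects {x | P x} {y | Q y}.
Proof.
intros hq hg; exists (fun s => exist Q (g (proj1_sig s)) (hq _ (proj2_sig s))).
intros [x px] [y py] h; simpl in h.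
assert (g x = g y) by (apply (f_equal (@proj1_sig _ _)) in h; exact h).
assert (x = y) by (apply hg; auto). subst y.
f_equal; apply proof_irrelevance.
Qed.

Lemma inj_sub (A : Type) (P Q : A -> Prop) :
  (forall x, P x -> Q x) -> injects {x | P x} {x | Q x}.
Proof. intros h; apply inj_sub_fun2 with (g := fun x => x); auto. Qed.

Lemma fun_of_inj (A B : Type) (P : A -> Prop) (Q : B -> Prop) (b0 : B) :
  injects {x | P x} {y | Q y} ->
  exists g : A -> B, (forall x, P x -> Q (g x)) /\
    (forall x y, P x -> P y -> g x = g y -> x = y).
Proof.
intros [f hf].
exists (fun x => match excluded_middle_informative (P x) with
          | left p => proj1_sig (f (exist P x p)) | right _ => b0 end).
split.
- intros x px; destruct (excluded_middle_informative (P x)); [apply proj2_sig|contradiction].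
- intros x y px py.
  destruct (excluded_middle_informative (P x)); [|contradiction].
  destruct (excluded_middle_informative (P y)); [|contradiction].
  intros h. apply eq_sig_hprop in h; [|intros; apply proof_irrelevance].
  apply hf in h. apply (f_equal (@proj1_sig _ _)) in h. exact h.
Qed.

Lemma fun_of_inj1 (A B : Type) (P : A -> Prop) (b0 : B) :
  injects {x | P x} B ->
  exists g : A -> B, (forall x y, P x -> P y -> g x = g y -> x = y).
Proof.
intros h.
assert (h2 : injects {x | P x} {y : B | True}).
{ apply inj_trans with B; auto. exists (fun b => exist _ b I). intros x y e.
  apply (f_equal (@proj1_sig _ _)) in e; exact e. }
destruct (fun_of_inj _ _ _ _ b0 h2) as [g [_ hg]]. exists g; auto.
Qed.

Lemma fun_of_equinum (A B : Type) (P : A -> Prop) (Q : B -> Prop) (b0 : B) :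
  equinum {x | P x} {y | Q y} ->
  exists g : A -> B, (forall x, P x -> Q (g x)) /\
    (forall x y, P x -> P y -> g x = g y -> x = y) /\
    (forall y, Q y -> exists x, P x /\ g x = y).
Proof.
intros [f [hf hs]].
exists (fun x => match excluded_middle_informative (P x) with
          | left p => proj1_sig (f (exist P x p)) | right _ => b0 end).
split; [|split].
- intros x px; destruct (excluded_middle_informative (P x)); [apply proj2_sig|contradiction].
- intros x y px py.
  destruct (excluded_middle_informative (P x)); [|contradiction].
  destruct (excluded_middle_informative (P y)); [|contradiction].
  intros h. apply eq_sig_hprop in h; [|intros; apply proof_irrelevance].
  apply hf in h. apply (f_equal (@proj1_sig _ _)) in h. exact h.
- intros y qy. destruct (hs (exist Q y qy)) as [[x px] e].
  exists x; split; auto.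
  destruct (excluded_middle_informative (P x)); [|contradiction].
  assert (p = px) by apply proof_irrelevance. subst p. rewrite e. reflexivity.
Qed.

Lemma inj_preimage (A B : Type) (P : A -> Prop) (Q : B -> Prop) (g : A -> B) :
  (forall b, Q b -> exists a, P a /\ g a = b) -> injects {b | Q b} {a | P a}.
Proof.
intros h.
assert (h' : forall s : {b | Q b}, {a | P a /\ g a = proj1_sig s}).
{ intros [b qb]; apply constructive_indefinite_description; apply h; auto. }
exists (fun s => exist P (proj1_sig (h' s)) (proj1 (proj2_sig (h' s)))).
intros s t e. apply (f_equal (@proj1_sig _ _)) in e; simpl in e.
destruct (h' s) as [a [pa ea]]; destruct (h' t) as [a' [pa' ea']]; simpl in e.
subst a'. rewrite ea in ea'.
destruct s as [b qb]; destruct t as [b' qb']; simpl in *. subst b'.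
f_equal; apply proof_irrelevance.
Qed.

Lemma inj_prod (A A' B B' : Type) : injects A A' -> injects B B' -> injects (A * B) (A' * B').
Proof.
intros [f hf] [g hg]; exists (fun p => (f (fst p), g (snd p))).
intros [a b] [c d] e; simpl in e; injection e; intros; f_equal; auto.
Qed.

Lemma shift (A : Type) : injects nat A -> injects (option A) A.
Proof.
intros [g hg].
assert (inv : forall a, {n | g n = a} + {~ exists n, g n = a}).
{ intros a; destruct (excluded_middle_informative (exists n, g n = a)) as [e|ne].
  - left; apply constructive_indefinite_description; exact e.
  - right; exact ne. }
exists (fun o => match o with None => g 0%N | Some a =>
          match inv a with inleft (exist n _) => g (S n) | inright _ => a end end).
intros [a|] [b|]; simpl.
- destruct (inv a) as [[n en]|na]; destruct (inv b) as [[m em]|nb]; intros e.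
  + apply hg in e. injection e; intros; subst; auto.
  + exfalso; apply nb; exists (S n); auto.
  + exfalso; apply na; exists (S m); auto.
  + subst; auto.
- destruct (inv a) as [[n en]|na]; intros e.
  + apply hg in e; discriminate.
  + exfalso; apply na; exists 0%N; auto.
- destruct (inv b) as [[n en]|na]; intros e.
  + apply hg in e; discriminate.
  + exfalso; apply na; exists 0%N; auto.
- auto.
Qed.

Lemma opt_nat (A : Type) : injects nat (option A) -> injects nat A.
Proof.
intros [g hg].
destruct (classic (exists n0, g n0 = None)) as [[n0 e0]|ne].
- pose idx := fun m => if Nat.ltb m n0 then m else S m.
  assert (hidx : forall m, idx m <> n0).
  { intros m; unfold idx; destruct (Nat.ltb m n0) eqn:E;
    [apply PeanoNat.Nat.ltb_lt in E|apply PeanoNat.Nat.ltb_ge in E]; lia. }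
  assert (hidx2 : forall m m', idx m = idx m' -> m = m').
  { intros m m'; unfold idx; destruct (Nat.ltb m n0) eqn:E; destruct (Nat.ltb m' n0) eqn:E';
    repeat match goal with H: Nat.ltb _ _ = true |- _ => apply PeanoNat.Nat.ltb_lt in H
      | H : Nat.ltb _ _ = false |- _ => apply PeanoNat.Nat.ltb_ge in H end; lia. }
  assert (hs : forall m, exists a, g (idx m) = Some a).
  { intros m; destruct (g (idx m)) eqn:E; [eauto|].
    exfalso; apply (hidx m); apply hg; rewrite E e0; auto. }
  destruct (hs 0%N) as [a0 _].
  exists (fun m => match g (idx m) with Some a => a | None => a0 end).
  intros m m' e.
  destruct (hs m) as [a ea]; destruct (hs m') as [b eb]; rewrite ea eb in e; subst b.
  apply hidx2, hg; rewrite ea eb; auto.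
- assert (hs : forall m, exists a, g m = Some a).
  { intros m; destruct (g m) eqn:E; [eauto|]. exfalso; apply ne; exists m; auto. }
  destruct (hs 0%N) as [a0 _].
  exists (fun m => match g m with Some a => a | None => a0 end).
  intros m m' e.
  destruct (hs m) as [a ea]; destruct (hs m') as [b eb]; rewrite ea eb in e; subst b.
  apply hg; rewrite ea eb; auto.
Qed.

Local Close Scope classical_set_scope.

Lemma wf_least (K:Type) (lt : K->K->Prop) (wf : well_founded lt) (P : K -> Prop) :
  (exists z, P z) -> exists z, P z /\ forall z', lt z' z -> ~ P z'.
Proof.
intros [z0 p0]. apply NNPP; intros hn.
assert (forall z, ~ P z).
{ intros z; induction (wf z) as [z _ IH]. intros pz. apply hn; exists z; split; auto. }
eauto.
Qed.

Lemma collapse (K : Type) (lt : K -> K -> Prop) (Hwo : strict_well_order lt)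
  (W : Type) (R : W -> W -> Prop) (k0 : K) :
  well_founded R -> (forall x y z, R x y -> R y z -> R x z) ->
  (forall w, ~ injects K {w' | R w' w}) ->
  exists r : W -> K, (forall w w', R w' w -> lt (r w') (r w)) /\
    (forall w z, lt z (r w) -> exists w', R w' w /\ r w' = z) /\
    (forall w, ~ exists w', R w' w /\ r w' = r w).
Proof.
destruct Hwo as [irr [trn [tri wf]]].
intros wfR trR hseg.
pose step := fun (w : W) (rec : forall w', R w' w -> K) =>
  epsilon (inhabits k0) (fun z => (~ exists w' (h : R w' w), rec w' h = z) /\
     forall z', lt z' z -> exists w' (h : R w' w), rec w' h = z').
pose r := Fix wfR (fun _ => K) step.
assert (req : forall w, r w = step w (fun w' _ => r w')).
{ intros w; unfold r; apply (@Fix_eq W R wfR (fun _ => K) step).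
  intros x f g hfg. assert (f = g).
  { apply functional_extensionality_dep; intros y; apply functional_extensionality_dep; intros p; auto. }
  subst; reflexivity. }
assert (spec : forall w, (~ exists w', R w' w /\ r w' = r w) /\
   (forall z', lt z' (r w) -> exists w', R w' w /\ r w' = z')).
{ intros w.
  assert (ex : exists z, (~ exists w' (h : R w' w), r w' = z) /\
     forall z', lt z' z -> exists w' (h : R w' w), r w' = z').
  { destruct (@wf_least _ _ wf (fun z => ~ exists w' (h : R w' w), r w' = z)) as [z [pz hz]].
    - apply NNPP; intros hn. apply (hseg w).
      apply inj_trans with {z : K | True}.
      + exists (fun z => exist _ z I). intros x y e; apply (f_equal (@proj1_sig _ _)) in e; exact e.
      + apply inj_preimage with (g := r). intros b _. apply NNPP; intros hb.
        apply hn; exists b; intros [w' [h e]]; apply hb; exists w'; auto.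
    - exists z; split; auto. intros z' lz'. apply NNPP; intros hh; apply (hz z' lz'); auto. }
  pose proof (epsilon_spec (inhabits k0) _ ex) as [s1 s2].
  assert (E : step w (fun w' _ => r w') = r w) by (symmetry; apply req).
  unfold step in E; cbv beta in E. rewrite E in s1, s2.
  split.
  - intros [w' [h e]]; apply s1; exists w', h; auto.
  - intros z' lz'; destruct (s2 z' lz') as [w' [h e]]; exists w'; auto. }
exists r. split; [|split].
- intros w w' hw.
  destruct (tri (r w') (r w)) as [h|[h|h]]; auto.
  + exfalso; apply (proj1 (spec w)); exists w'; auto.
  + exfalso. destruct (proj2 (spec w') _ h) as [w'' [h1 h2]].
    apply (proj1 (spec w)); exists w''; split; eauto.
- intros w z h; apply (proj2 (spec w)); auto.
- intros w; apply (proj1 (spec w)).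
Qed.

Set Implicit Arguments.
Unset Strict Implicit.

Definition lek (K : Type) (lt : K -> K -> Prop) x y := lt x y \/ x = y.
Definition mx (K : Type) (lt : K -> K -> Prop) (x y : K) : K :=
  if excluded_middle_informative (lt x y) then y else x.
Definition godel (K : Type) (lt : K -> K -> Prop) (p q : K * K) : Prop :=
  lt (mx lt (fst p) (snd p)) (mx lt (fst q) (snd q)) \/
  (mx lt (fst p) (snd p) = mx lt (fst q) (snd q) /\
   (lt (fst p) (fst q) \/ (fst p = fst q /\ lt (snd p) (snd q)))).

Section G.
End G.

Lemma mx_cases (K : Type) (lt : K -> K -> Prop) x y : mx lt x y = x \/ mx lt x y = y.
Proof. unfold mx; destruct (excluded_middle_informative (lt x y)); auto. Qed.

Lemma mx_ge (K : Type) (lt : K -> K -> Prop) (Hwo : strict_well_order lt) x y :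
  lek lt x (mx lt x y) /\ lek lt y (mx lt x y).
Proof.
destruct Hwo as [irr [trn [tri wf]]].
unfold mx, lek; destruct (excluded_middle_informative (lt x y)) as [h|h]; auto.
destruct (tri x y) as [h1|[h1|h1]]; [contradiction|subst; auto|auto].
Qed.

Lemma lek_trans (K : Type) (lt : K -> K -> Prop) (Hwo : strict_well_order lt) x y z :
  lek lt x y -> lek lt y z -> lek lt x z.
Proof.
destruct Hwo as [irr [trn [tri wf]]].
unfold lek; intros [h|h] [h'|h']; subst; eauto.
Qed.

Lemma lek_lt_trans (K : Type) (lt : K -> K -> Prop) (Hwo : strict_well_order lt) x y z :
  lek lt x y -> lt y z -> lt x z.
Proof.
destruct Hwo as [irr [trn [tri wf]]].
unfold lek; intros [h|h] h'; subst; eauto.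
Qed.

Lemma lt_lek_trans (K : Type) (lt : K -> K -> Prop) (Hwo : strict_well_order lt) x y z :
  lt x y -> lek lt y z -> lt x z.
Proof.
destruct Hwo as [irr [trn [tri wf]]].
unfold lek; intros h' [h|h]; subst; eauto.
Qed.

Lemma not_lt_lek (K : Type) (lt : K -> K -> Prop) (Hwo : strict_well_order lt) x y :
  ~ lt x y -> lek lt y x.
Proof.
destruct Hwo as [irr [trn [tri wf]]].
unfold lek; intros h; destruct (tri x y) as [h1|[h1|h1]]; auto; contradiction.
Qed.

Lemma godel_wf (K : Type) (lt : K -> K -> Prop) (Hwo : strict_well_order lt) :
  well_founded (godel lt).
Proof.
pose proof Hwo as Hwo'.
destruct Hwo as [irr [trn [tri wf]]].
assert (H : forall M a b, mx lt a b = M -> Acc (godel lt) (a, b)).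
{ intros M; induction (wf M) as [M _ IHM].
  intros a; induction (wf a) as [a _ IHa].
  intros b; induction (wf b) as [b _ IHb].
  intros eM; constructor; intros [a' b'] hg.
  destruct hg as [h|[h1 [h2|[h2 h3]]]]; simpl in *.
  - apply (IHM (mx lt a' b')); [rewrite <- eM; auto|reflexivity].
  - apply (IHa a'); auto. rewrite h1; auto.
  - subst a'. apply IHb; auto. rewrite h1; auto. }
intros [a b]; apply (H (mx lt a b)); reflexivity.
Qed.

Lemma godel_trans (K : Type) (lt : K -> K -> Prop) (Hwo : strict_well_order lt) p q s :
  godel lt p q -> godel lt q s -> godel lt p s.
Proof.
destruct Hwo as [irr [trn [tri wf]]].
unfold godel.
intros [h|[h1 h2]] [h'|[h1' h2']].
- left; eauto.
- left; rewrite <- h1'; auto.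
- left; rewrite h1; auto.
- right; split; [congruence|].
  destruct h2 as [h2|[h2 h3]]; destruct h2' as [h2'|[h2' h3']].
  + left; eauto.
  + left; rewrite <- h2'; auto.
  + left; rewrite h2; auto.
  + right; split; [congruence|eauto].
Qed.

Lemma godel_tri (K : Type) (lt : K -> K -> Prop) (Hwo : strict_well_order lt) p q :
  godel lt p q \/ p = q \/ godel lt q p.
Proof.
destruct Hwo as [irr [trn [tri wf]]].
destruct p as [a b]; destruct q as [c d]; unfold godel; simpl.
destruct (tri (mx lt a b) (mx lt c d)) as [h|[h|h]].
- left; left; auto.
- destruct (tri a c) as [h1|[h1|h1]].
  + left; right; auto.
  + subst c; destruct (tri b d) as [h2|[h2|h2]].
    * left; right; split; auto.
    * subst; right; left; reflexivity.
    * right; right; right; split; auto.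
  + right; right; right; split; auto.
- right; right; left; auto.
Qed.

Lemma godel_seg (K : Type) (lt : K -> K -> Prop) (Hwo : strict_well_order lt) a' b' a b :
  godel lt (a', b') (a, b) -> lek lt a' (mx lt a b) /\ lek lt b' (mx lt a b).
Proof.
intros hg.
assert (hm : lek lt (mx lt a' b') (mx lt a b)).
{ destruct hg as [h|[h _]]; simpl in h; unfold lek; auto. }
destruct (mx_ge Hwo a' b') as [h1 h2].
split; eapply lek_trans; eauto.
Qed.

Lemma le_opt (K : Type) (lt : K -> K -> Prop) (Hwo : strict_well_order lt) M :
  injects {x | lek lt x M} (option {x | below lt M x}).
Proof.
assert (hp : forall x, lek lt x M -> x <> M -> below lt M x).
{ intros x [h|h] ne; [exact h|contradiction]. }
exists (fun s => match excluded_middle_informative (proj1_sig s = M) with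
  | left _ => None | right ne => Some (exist _ (proj1_sig s) (hp _ (proj2_sig s) ne)) end).
intros [x px] [y py]; simpl.
destruct (excluded_middle_informative (x = M)) as [e1|n1];
destruct (excluded_middle_informative (y = M)) as [e2|n2]; intros e; try discriminate.
- subst; f_equal; apply proof_irrelevance.
- injection e; intros; subst; f_equal; apply proof_irrelevance.
Qed.

Lemma le_small (K : Type) (lt : K -> K -> Prop) (Hwo : strict_well_order lt) M :
  injects nat {x | below lt M x} -> injects {x | lek lt x M} {x | below lt M x}.
Proof.
intros h; eapply inj_trans; [apply (le_opt Hwo)|apply shift; auto].
Qed.

Lemma le_fin (K : Type) (lt : K -> K -> Prop) (Hwo : strict_well_order lt) M :
  ~ injects nat {x | below lt M x} -> ~ injects nat {x | lek lt x M}.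
Proof.
intros h h2; apply h, opt_nat; eapply inj_trans; [exact h2|apply (le_opt Hwo)].
Qed.

Lemma hess (K : Type) (lt : K -> K -> Prop) (Hwo : strict_well_order lt) (lam : K)
  (Hsucc1 : forall a, injects {x | below lt a x} {x | below lt lam x})
  (Hsucc2 : ~ injects K {x | below lt lam x}) :
  forall m, injects nat {x | below lt m x} ->
    injects ({x | below lt m x} * {x | below lt m x}) {x | below lt m x}.
Proof.
pose proof Hwo as Hwo'.
destruct Hwo as [irr [trn [tri wf]]].
intros m; induction (wf m) as [m _ IH]; intros Hinf.
destruct (classic (exists m', lt m' m /\ injects {x | below lt m x} {x | below lt m' x}))
  as [[m' [lm' hi]]|hcard].
- assert (hinf' : injects nat {x | below lt m' x}) by (eapply inj_trans; eauto).
  eapply inj_trans; [apply inj_prod; exact hi|].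
  eapply inj_trans; [apply IH; auto|].
  apply inj_sub; intros x hx; unfold below in *; eauto.
- pose (W := ({x | below lt m x} * {x | below lt m x})%type).
  pose (f := fun w : W => (proj1_sig (fst w), proj1_sig (snd w))).
  pose (R := fun w' w : W => godel lt (f w') (f w)).
  assert (wfR : well_founded R) by (exact (wf_inverse_image _ _ (godel lt) f (godel_wf Hwo'))).
  assert (trR : forall x y z, R x y -> R y z -> R x z) by (intros; eapply (godel_trans Hwo'); eauto).
  assert (fin : forall x y : W, f x = f y -> x = y).
  { intros [[a pa] [b pb]] [[c pc] [d pd]]; unfold f; simpl; intros e; injection e; intros; subst.
    f_equal; f_equal; apply proof_irrelevance. }
  assert (segb : forall w : W, exists M, lt M m /\
     injects {w' | R w' w} ({x | lek lt x M} * {x | lek lt x M})).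
  { intros w. exists (mx lt (fst (f w)) (snd (f w))). split.
    - destruct w as [[a pa] [b pb]]; unfold f; simpl.
      destruct (mx_cases lt a b) as [e|e]; rewrite e; auto.
    - assert (hs : forall w', R w' w -> lek lt (fst (f w')) (mx lt (fst (f w)) (snd (f w))) /\
                                    lek lt (snd (f w')) (mx lt (fst (f w)) (snd (f w)))).
      { intros w' hr. destruct (f w') as [a' b'] eqn:E1. destruct (f w) as [a b] eqn:E2.
        apply (godel_seg Hwo'). unfold R in hr; rewrite E1 E2 in hr; exact hr. }
      exists (fun s => (exist _ (fst (f (proj1_sig s))) (proj1 (hs _ (proj2_sig s))),
                        exist _ (snd (f (proj1_sig s))) (proj2 (hs _ (proj2_sig s))))).
      intros [x px] [y py]; simpl; intros e.
      pose proof (f_equal (fun p => proj1_sig (fst p)) e) as e1.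
      pose proof (f_equal (fun p => proj1_sig (snd p)) e) as e2.
      simpl in e1, e2.
      assert (x = y).
      { apply fin. unfold f in *; simpl in *; f_equal; auto. }
      subst y; f_equal; apply proof_irrelevance. }
  assert (small : forall w : W, ~ injects K {w' | R w' w} /\ ~ injects {x | below lt m x} {w' | R w' w}).
  { intros w; destruct (segb w) as [M [lM hM]].
    destruct (classic (injects nat {x | below lt M x})) as [iM|iM].
    - assert (h1 : injects {w' | R w' w} {x | below lt M x}).
      { eapply inj_trans; [exact hM|].
        eapply inj_trans; [apply inj_prod; apply (le_small Hwo'); auto|].
        apply IH; auto. }
      split; intros h2.
      + apply Hsucc2. eapply inj_trans; [exact h2|]. eapply inj_trans; [exact h1|]. apply Hsucc1.
      + apply hcard; exists M; split; auto. eapply inj_trans; eauto.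
    - assert (h1 : ~ injects nat {w' | R w' w}).
      { intros h2. apply (fin_prod _ _ (le_fin Hwo' iM) (le_fin Hwo' iM)). eapply inj_trans; eauto. }
      split; intros h2; apply h1.
      + eapply inj_trans; [|exact h2]. eapply inj_trans; [exact Hinf|].
        exists (@proj1_sig _ _). intros [a pa] [b pb] e; simpl in e; subst; f_equal; apply proof_irrelevance.
      + eapply inj_trans; [exact Hinf|exact h2]. }
  destruct Hinf as [g0 _].
  destruct (@collapse K lt Hwo' W R (proj1_sig (g0 0%N)) wfR trR (fun w => proj1 (small w)))
    as [r [rmono [rdown rnot]]].
  assert (bound : forall w, below lt m (r w)).
  { intros w. apply NNPP; intros hn. apply (proj2 (small w)).
    apply inj_preimage with (g := r).
    intros z pz.
    assert (lt z (r w)).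
    { unfold below in *. eapply lt_lek_trans; eauto. apply (not_lt_lek Hwo'); auto. }
    destruct (rdown w z H) as [w' [h1 h2]]. exists w'; split; auto. }
  exists (fun w => exist _ (r w) (bound w)).
  intros w w' e. apply (f_equal (@proj1_sig _ _)) in e; simpl in e.
  destruct (godel_tri Hwo' (f w) (f w')) as [h|[h|h]].
  + exfalso; pose proof (rmono w' w h) as hh; rewrite e in hh; eapply irr; eauto.
  + apply fin; auto.
  + exfalso; pose proof (rmono w w' h) as hh; rewrite e in hh; eapply irr; eauto.
Qed.

Lemma small_ord (K : Type) (lt : K -> K -> Prop) (Hwo : strict_well_order lt) (lam : K)
  (Hsucc2 : ~ injects K {x | below lt lam x}) (A : Type) :
  injects A {x | below lt lam x} -> ~ injects {x | below lt lam x} A ->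
  exists g, lt g lam /\ injects A {x | below lt g x}.
Proof.
pose proof Hwo as Hwo'.
destruct Hwo as [irr [trn [tri wf]]].
intros [g hg] hn.
pose (gg := fun a => proj1_sig (g a)).
pose (R := fun a a' => lt (gg a) (gg a')).
assert (wfR : well_founded R) by (exact (wf_inverse_image _ _ lt gg wf)).
assert (trR : forall x y z, R x y -> R y z -> R x z) by (unfold R; intros; eauto).
assert (segA : forall a, injects {a' | R a' a} A).
{ intros a; exists (@proj1_sig _ _). intros [x px] [y py] e; simpl in e; subst; f_equal; apply proof_irrelevance. }
assert (hseg : forall a, ~ injects K {a' | R a' a}).
{ intros a h; apply Hsucc2. eapply inj_trans; [exact h|]. eapply inj_trans; [apply segA|]. exists g; auto. }
destruct (@collapse K lt Hwo' A R lam wfR trR hseg) as [r [rmono [rdown rnot]]].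
assert (bound : forall a, lt (r a) lam).
{ intros a; apply NNPP; intros h. apply hn. eapply inj_trans; [|apply (segA a)].
  apply inj_preimage with (g := r). intros z pz.
  apply rdown. eapply lt_lek_trans; eauto. apply (not_lt_lek Hwo'); auto. }
assert (hg0 : exists g0, lt g0 lam /\ forall a, r a <> g0).
{ apply NNPP; intros h. apply hn.
  apply inj_trans with {a : A | True}.
  - apply inj_preimage with (g := r). intros b pb. apply NNPP; intros h2; apply h.
    exists b; split; auto. intros a e; apply h2; exists a; auto.
  - exists (fun s => proj1_sig s). intros [x px] [y py] e; simpl in e; subst; f_equal; apply proof_irrelevance. }
destruct hg0 as [g0 [lg0 hg0]].
exists g0; split; auto.
assert (hb : forall a, below lt g0 (r a)).
{ intros a; unfold below. destruct (tri (r a) g0) as [h|[h|h]]; auto.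
  - exfalso; eapply hg0; eauto.
  - exfalso. destruct (rdown a g0 h) as [a' [_ e]]. eapply hg0; eauto. }
exists (fun a => exist _ (r a) (hb a)).
intros a a' e. apply (f_equal (@proj1_sig _ _)) in e; simpl in e.
destruct (tri (gg a) (gg a')) as [h|[h|h]].
- exfalso; pose proof (rmono a' a h) as hh; rewrite e in hh; eapply irr; eauto.
- apply hg. apply eq_sig_hprop; [intros; apply proof_irrelevance|exact h].
- exfalso; pose proof (rmono a a' h) as hh; rewrite e in hh; eapply irr; eauto.
Qed.

Lemma prod_small (K : Type) (lt : K -> K -> Prop) (Hwo : strict_well_order lt) (lam : K)
  (Hlam_inf : infinite_type {x | below lt lam x})
  (Hlam_card : forall b, lt b lam -> ~ injects {x | below lt lam x} {x | below lt b x})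
  (Hsucc1 : forall a, injects {x | below lt a x} {x | below lt lam x})
  (Hsucc2 : ~ injects K {x | below lt lam x})
  (d : K) (T : Type) : lt d lam ->
  injects T {x | below lt lam x} -> ~ injects {x | below lt lam x} T ->
  ~ injects {x | below lt lam x} ({x | below lt d x} * T).
Proof.
pose proof Hwo as Hwo'.
destruct Hwo as [irr [trn [tri wf]]].
intros ld hT hnT hP.
destruct (small_ord Hwo' Hsucc2 hT hnT) as [g [lg hg]].
assert (hm : exists m, lt m lam /\ (forall x, lt x d -> lt x m) /\ (forall x, lt x g -> lt x m)).
{ destruct (tri d g) as [h|[h|h]].
  - exists g; split; [|split]; eauto.
  - subst; exists g; auto.
  - exists d; split; [|split]; eauto. }
destruct hm as [m [lm [hd hgm]]].
assert (h2 : injects {x | below lt lam x} ({x | below lt m x} * {x | below lt m x})).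
{ eapply inj_trans; [exact hP|]. apply inj_prod.
  - apply inj_sub; auto.
  - eapply inj_trans; [exact hg|]. apply inj_sub; auto. }
destruct (classic (injects nat {x | below lt m x})) as [im|im].
- apply (Hlam_card m lm). eapply inj_trans; [exact h2|]. apply (hess Hwo' Hsucc1 Hsucc2); auto.
- apply (fin_prod _ _ im im). eapply inj_trans; [exact Hlam_inf|exact h2].
Qed.

Lemma lam_big (K : Type) (lt : K -> K -> Prop) (Hwo : strict_well_order lt) (lam : K)
  (Hlam_inf : infinite_type {x | below lt lam x})
  (Hlam_card : forall b, lt b lam -> ~ injects {x | below lt lam x} {x | below lt b x})
  (c : K) : lt c lam -> ~ injects {x | below lt lam x} {x | lek lt x c}.
Proof.
intros lc h.
destruct (classic (injects nat {x | below lt c x})) as [ic|ic].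
- apply (Hlam_card c lc). eapply inj_trans; [exact h|]. apply (le_small Hwo); auto.
- apply (le_fin Hwo ic). eapply inj_trans; [exact Hlam_inf|exact h].
Qed.

Lemma core (K : Type) (lt : K -> K -> Prop) (Hwo : strict_well_order lt) (lam : K) (Chi : Type)
  (Hlam_inf : infinite_type {x | below lt lam x})
  (Hlam_card : forall b, lt b lam -> ~ injects {x | below lt lam x} {x | below lt b x})
  (Hsucc1 : forall a, injects {x | below lt a x} {x | below lt lam x})
  (Hsucc2 : ~ injects K {x | below lt lam x})
  (c0 : Chi)
  (Hchi_lt : card_lt Chi {x | below lt lam x})
  (F : K -> K -> (K -> Prop))
  (HF : forall i b, card_lt {x | F i b x} Chi)
  (a : K) (la : lt lam a) (Ea : E_cf lt lam a)
  (Hm : forall f, regressive lt a f -> forall B : K -> Prop, sup_eq lt B a ->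
       exists i, lt i a /\ sup_eq lt (fun b => B b /\ F i b (f b)) a) : False.
Proof.
pose proof Hwo as Hwo'.
destruct Hwo as [irr [trn [tri wf]]].
destruct Ea as [X [Y [cofX [cofY [minX [minY eqXY]]]]]].
destruct (fun_of_equinum _ _ _ _ lam eqXY) as [q [hqY [hqi hqs]]].
destruct (fun_of_inj _ _ _ _ lam (Hsucc1 a)) as [e [he1 he2]].
destruct (@wf_least _ _ wf (fun mu => injects {x | X x} {x | below lt mu x})) as [mu [hmu minmu]].
{ exists a. apply inj_sub. apply (proj1 cofX). }
destruct (fun_of_inj _ _ _ _ lam hmu) as [k [hk1 hk2]].
assert (hiota : forall p : K * K, {g : K -> Chi | forall z z', F (fst p) (snd p) z -> F (fst p) (snd p) z' -> g z = g z' -> z = z'}).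
{ intros p; apply constructive_indefinite_description.
  destruct (fun_of_inj1 _ _ _ c0 (proj1 (HF (fst p) (snd p)))) as [g hg]; exists g; auto. }
pose (iota := fun i b => proj1_sig (hiota (i, b))).
assert (hiota2 : forall i b z z', F i b z -> F i b z' -> iota i b z = iota i b z' -> z = z').
{ intros i b; exact (proj2_sig (hiota (i, b))). }
clearbody iota.
assert (hlim : forall d, lt d a -> exists d2, lt d d2 /\ lt d2 a).
{ intros d ld. apply NNPP; intros hn.
  assert (c1 : cofinal_in lt (fun b => b = d) a).
  { split; [intros b eb; subst; auto|].
    intros d' ld'. exists d; split; auto.
    destruct (tri d' d) as [h|[h|h]]; auto. exfalso; apply hn; exists d'; auto. }
  destruct (minX _ c1) as [g hg].
  assert (xsub : forall x x', X x -> X x' -> x = x').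
  { intros x x' hx hx'.
    assert (E : g (exist _ x hx) = g (exist _ x' hx')).
    { destruct (g (exist _ x hx)) as [u pu]; destruct (g (exist _ x' hx')) as [u' pu'].
      subst; f_equal; apply proof_irrelevance. }
    apply hg in E. apply (f_equal (@proj1_sig _ _)) in E; exact E. }
  assert (ysub : forall y y', Y y -> Y y' -> y = y').
  { intros y y' hy hy'. destruct (hqs y hy) as [x [hx ex]]; destruct (hqs y' hy') as [x' [hx' ex']].
    subst; f_equal; auto. }
  pose proof Hlam_inf as [g0 _].
  destruct (proj2 cofY (proj1_sig (g0 0%N)) (proj2_sig (g0 0%N))) as [y0 [hy0 _]].
  apply (lam_big Hwo' Hlam_inf Hlam_card (proj1 cofY y0 hy0)).
  apply inj_sub. intros z lz. destruct (proj2 cofY z lz) as [y [hy hzy]].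
  rewrite (ysub y y0 hy hy0) in hzy. unfold lek; destruct hzy; auto. }
pose (B := fun b => X b /\ lek lt lam b).
assert (supB : sup_eq lt B a).
{ split; [intros b [hb _]; apply (proj1 cofX); auto|].
  intros d ld.
  assert (hd' : exists d', lt d' a /\ lek lt d d' /\ lek lt lam d').
  { destruct (tri d lam) as [h|[h|h]].
    - exists lam; split; [auto|split; unfold lek; auto].
    - subst; exists lam; split; [auto|split; unfold lek; auto].
    - exists d; split; [auto|split; unfold lek; auto]. }
  destruct hd' as [d' [ld' [h1 h2]]].
  destruct (hlim d' ld') as [d2 [l1 l2]].
  destruct (proj2 cofX d2 l2) as [b [hb hb2]].
  assert (lt d' b) by (destruct hb2; subst; eauto).
  exists b; split.
  - split; auto. left; eapply lek_lt_trans; eauto.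
  - eapply lek_lt_trans; eauto. }
pose (A := fun x i => lt i a /\ exists x', X x' /\ lt (k x') (k x) /\ lek lt (e i) (q x')).
assert (hd : forall x, X x -> exists d, lt d lam /\ forall x', X x' -> lt (k x') (k x) -> lt (q x') d).
{ intros x hx. apply NNPP; intros hn.
  assert (cof : cofinal_in lt (fun y => exists x', X x' /\ lt (k x') (k x) /\ q x' = y) lam).
  { split.
    - intros b [x' [hx' [_ eb]]]; subst; apply (proj1 cofY); auto.
    - intros d ld. apply NNPP; intros h1; apply hn; exists d; split; auto.
      intros x' hx' hk. apply NNPP; intros h2; apply h1; exists (q x'); split; [eauto|].
      destruct (tri d (q x')) as [h|[h|h]]; auto. contradiction. }
  apply (minmu (k x) (hk1 x hx)).
  eapply inj_trans; [apply inj_sub_fun2 with (g := q); [exact hqY|exact hqi]|].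
  eapply inj_trans; [apply minY; exact cof|].
  eapply inj_trans; [apply inj_preimage with (g := q) (P := fun x' => X x' /\ lt (k x') (k x)); intros b [x' [h1 [h2 h3]]]; exists x'; auto|].
  apply inj_sub_fun2 with (g := k); [intros y [hy1 hy2]; exact hy2|].
  intros u v [hu _] [hv _]; apply hk2; auto. }
assert (avoid : forall x, X x -> lek lt lam x -> exists z, lt z x /\ forall i, A x i -> ~ F i x z).
{ intros x hx hlx. destruct (hd x hx) as [d [ld hd']].
  apply NNPP; intros hn.
  assert (cover : forall z, below lt lam z -> exists i, A x i /\ F i x z).
  { intros z lz. apply NNPP; intros h1; apply hn; exists z; split.
    - unfold below in lz; eapply lt_lek_trans; eauto.
    - intros i hA hF; apply h1; exists i; auto. }
  assert (hc : forall s : {z | below lt lam z}, {i | A x i /\ F i x (proj1_sig s)}).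
  { intros s; apply constructive_indefinite_description; apply cover; apply proj2_sig. }
  assert (hed : forall i, A x i -> below lt d (e i)).
  { intros i [li [x' [hx' [hk he]]]]. unfold below. eapply lek_lt_trans; eauto. }
  apply (prod_small Hwo' Hlam_inf Hlam_card Hsucc1 Hsucc2 ld (proj1 Hchi_lt) (proj2 Hchi_lt)).
  exists (fun s => (exist _ (e (proj1_sig (hc s))) (hed _ (proj1 (proj2_sig (hc s)))),
                   iota (proj1_sig (hc s)) x (proj1_sig s))).
  intros s t E.
  pose proof (f_equal (fun p => proj1_sig (fst p)) E) as E1.
  pose proof (f_equal snd E) as E2. simpl in E1, E2.
  destruct (hc s) as [i [hAi hFi]]; destruct (hc t) as [j [hAj hFj]]; simpl in *.
  assert (i = j) by (apply he2; [apply (proj1 hAi)|apply (proj1 hAj)|exact E1]).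
  subst j.
  apply eq_sig_hprop; [intros; apply proof_irrelevance|].
  eapply hiota2; eauto. }
pose (Q := fun b z => (B b -> lt z b /\ forall i, A b i -> ~ F i b z) /\
   ((exists g, lt g b) -> lt z b) /\ (~ (exists g, lt g b) -> z = b)).
pose (f := fun b => epsilon (inhabits lam) (Q b)).
assert (hf : forall b, Q b (f b)).
{ intros b; apply epsilon_spec.
  destruct (classic (B b)) as [hB|hB].
  - destruct (avoid b (proj1 hB) (proj2 hB)) as [z [lz hz]].
    exists z; split; [auto|split; [auto|]]. intros hn; exfalso; apply hn; eauto.
  - destruct (classic (exists g, lt g b)) as [[g lg]|ng].
    + exists g; split; [intros; contradiction|split; [auto|]]. intros hn; exfalso; apply hn; eauto.
    + exists b; split; [intros; contradiction|split; [intros; contradiction|auto]]. }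
assert (reg : regressive lt a f).
{ split.
  - intros b lb. destruct (classic (exists g, lt g b)) as [hg|ng].
    + eapply trn; [apply (proj1 (proj2 (hf b))); auto|auto].
    + rewrite (proj2 (proj2 (hf b)) ng); auto.
  - intros b lb hg; apply (proj1 (proj2 (hf b))); auto. }
destruct (Hm f reg B supB) as [i [li [hH1 hH2]]].
assert (hx1 : exists x0 x1, X x0 /\ X x1 /\ lek lt (e i) (q x0) /\ lt (k x0) (k x1)).
{ apply NNPP; intros hn.
  pose proof (he1 i li) as lei.
  destruct (proj2 cofY (e i) lei) as [y0 [hy0 hy0']].
  destruct (hqs y0 hy0) as [x0 [hx0 ex0]].
  assert (ly0 : lt y0 lam) by (apply (proj1 cofY); auto).
  apply (lam_big Hwo' Hlam_inf Hlam_card ly0).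
  apply inj_sub. intros z lz.
  assert (hz' : exists z', lt z' lam /\ lek lt z z' /\ lek lt y0 z').
  { destruct (tri z y0) as [h|[h|h]].
    - exists y0; split; [auto|split; unfold lek; auto].
    - subst z; exists y0; split; [auto|split; unfold lek; auto].
    - exists z; split; [auto|split; unfold lek; auto]. }
  destruct hz' as [z' [lz' [h1 h2]]].
  destruct (proj2 cofY z' lz') as [y' [hy' hy'']].
  destruct (hqs y' hy') as [x' [hx' ex']].
  assert (hzy : lek lt z' y') by (unfold lek; destruct hy''; auto).
  assert (hei0 : lek lt (e i) (q x0)) by (rewrite ex0; unfold lek; destruct hy0'; auto).
  assert (hei' : lek lt (e i) (q x')).
  { rewrite ex'. eapply (lek_trans Hwo'); [exact hei0|]. rewrite ex0.
    eapply (lek_trans Hwo'); eauto. }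
  destruct (tri (k x0) (k x')) as [h|[h|h]].
  - exfalso; apply hn; exists x0, x'; auto.
  - assert (x0 = x') by (apply hk2; auto). subst x'.
    rewrite ex0 in ex'. subst y'.
    eapply (lek_trans Hwo'); eauto.
  - exfalso; apply hn; exists x', x0; auto. }
destruct hx1 as [x0 [x1 [hx0 [hx1 [hex0 hk01]]]]].
assert (hsub : forall b, B b /\ F i b (f b) -> X b /\ lt (k b) (k x1)).
{ intros b [hB hF]. split; [apply (proj1 hB)|].
  apply NNPP; intros h.
  apply (proj2 (proj1 (hf b) hB) i); auto.
  split; auto. exists x0; split; [auto|split; auto].
  eapply lt_lek_trans; eauto. apply (not_lt_lek Hwo'); auto. }
assert (cofH : cofinal_in lt (fun b => B b /\ F i b (f b)) a).
{ split; auto. intros d ld; destruct (hH2 d ld) as [b [hb db]]; exists b; auto. }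
apply (minmu (k x1) (hk1 x1 hx1)).
eapply inj_trans; [apply minX; exact cofH|].
eapply inj_trans; [apply inj_sub; exact hsub|].
apply inj_sub_fun2 with (g := k); [intros y [hy1 hy2]; exact hy2|].
intros u v [hu _] [hv _]; apply hk2; auto.
Qed.

Unset Implicit Arguments.
Set Strict Implicit.

Theorem proposition3p3
  (K : Type) (lt : K -> K -> Prop) (lam : K) (Chi : Type)
  (Hwo : strict_well_order lt)
  (* lam is an infinite cardinal (as an ordinal below kappa) *)
  (Hlam_inf : infinite_type {x | below lt lam x})
  (Hlam_card : forall b, lt b lam -> ~ injects {x | below lt lam x} {x | below lt b x})
  (* K has order type lam^+ *)
  (Hsucc1 : forall a, injects {x | below lt a x} {x | below lt lam x})
  (Hsucc2 : ~ injects K {x | below lt lam x})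
  (* chi = |Chi| is 2 or an infinite cardinal, and chi < lam *)
  (Hchi : (exists c1 c2 : Chi, c1 <> c2 /\ forall c, c = c1 \/ c = c2) \/ infinite_type Chi)
  (Hchi_lt : card_lt Chi {x | below lt lam x})
  (S : K -> Prop) (HS : in_J lt Chi S) :
  nonstationary lt (fun a => S a /\ E_cf lt lam a).
Proof.
pose proof Hwo as Hwo'.
destruct Hwo as [irr [trn [tri wf]]].
destruct HS as [C [F [Hclub [HF Hmain]]]].
exists (fun a => C a /\ lt lam a). split.
- split.
  + intros d.
    destruct (tri d lam) as [h|[h|h]].
    * destruct (proj1 Hclub lam) as [b [cb lb]]. exists b; split; [split; auto|eauto].
    * subst d. destruct (proj1 Hclub lam) as [b [cb lb]]. exists b; split; [split; auto|auto].
    * destruct (proj1 Hclub d) as [b [cb lb]]. exists b; split; [split; eauto|auto].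
  + intros a hg [hs1 hs2]. split.
    * apply (proj2 Hclub a hg). split.
      -- intros b [cb lb]; auto.
      -- intros d ld; destruct (hs2 d ld) as [b [[[cb _] lb] db]]; exists b; split; auto.
    * destruct hg as [g lg]; destruct (hs2 g lg) as [b [[[cb lb'] lba] _]]; eauto.
- intros a [[Ca la] [Sa Ea]].
  assert (c0 : exists c : Chi, True).
  { destruct Hchi as [[c1 _]|[h _]]; [exists c1|exists (h 0%N)]; auto. }
  destruct c0 as [c0 _].
  exact (core Hwo' Hlam_inf Hlam_card Hsucc1 Hsucc2 c0 Hchi_lt HF la Ea (Hmain a Sa Ca)).
Qed.
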